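(* Let $(X_B,X_C,X_R)$ be an OCC (not necessarily tight) in a graph $G$ and let $(A_B,A_C,A_R)$ be a tight OCC in $G$. Then $|A_C \cap X_B| \leq |X_C|$.
   Context: An OCT of $G$ is a set $S \subseteq V(G)$ with $G - S$ bipartite; $\mathrm{oct}(G)$ is its minimum size. An odd cycle cut (OCC) of $G$ is a partition $(X_B, X_C, X_R)$ of $V(G)$ such that $G[X_B]$ is bipartite, there is no edge between $X_B$ and $X_R$, and $X_B \cup X_C \neq \emptyset$. It is tight if $|X_C| = \mathrm{oct}(G[X_B \cup X_C])$. *)

(* Defs.v *)
From mathcomp Require Import all_boot all_order.
Set Implicit Arguments. Unset Strict Implicit. Unset Printing Implicit Defensive.

Definition simple_graph (T : finType) (e : rel T) : Prop :=
  symmetric e /\ irreflexive e.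

Definition bipartite_on (T : finType) (e : rel T) (S : {set T}) : bool :=
  [exists f : {ffun T -> bool},
     [forall x, forall y, [&& x \in S, y \in S & e x y] ==> (f x != f y)]].

Definition is_oct (T : finType) (e : rel T) (S O : {set T}) : bool :=
  (O \subset S) && bipartite_on e (S :\: O).

(* oct(G[S]) : minimum size of an OCT of G[S] (S itself is always an OCT,
   so #|S| is a valid initial value for the minimum). *)
Definition oct (T : finType) (e : rel T) (S : {set T}) : nat :=
  \big[minn/#|S|]_(O in powerset S | is_oct e S O) #|O|.

Definition is_partition3 (T : finType) (XB XC XR : {set T}) : Prop :=
  [/\ [disjoint XB & XC], [disjoint XB & XR], [disjoint XC & XR]
    & XB :|: XC :|: XR = setT].

Definition is_occ (T : finType) (e : rel T) (XB XC XR : {set T}) : Prop :=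
  [/\ is_partition3 XB XC XR,
      bipartite_on e XB,
      (forall x y, x \in XB -> y \in XR -> ~~ e x y)
    & XB :|: XC != set0].

Definition is_tight_occ (T : finType) (e : rel T) (XB XC XR : {set T}) : Prop :=
  is_occ e XB XC XR /\ #|XC| = oct e (XB :|: XC).

(* Main.v *)
Require Import Defs.
From mathcomp Require Import all_boot all_order.

Lemma bigmin_le (I : eqType) (r : seq I) (P : pred I) (F : I -> nat) i0 x :
  x \in r -> P x -> \big[minn/i0]_(i <- r | P i) F i <= F x.
Proof.
elim: r => [|a r IH] //; rewrite inE big_cons => /orP[/eqP <- -> | xr Px].
  exact: geq_minl.
case: (P a); last exact: IH.
exact: leq_trans (geq_minr _ _) (IH xr Px).
Qed.

Lemma oct_le (T : finType) (e : rel T) (S O : {set T}) :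
  is_oct e S O -> oct e S <= #|O|.
Proof.
move=> H; rewrite /oct; apply: bigmin_le; first exact: mem_index_enum.
by rewrite powersetE H andbT; case/andP: H.
Qed.

Theorem mainTheorem9 (T : finType) (e : rel T) (XB XC XR AB AC AR : {set T}) :
  simple_graph e ->
  is_occ e XB XC XR ->
  is_tight_occ e AB AC AR ->
  #|AC :&: XB| <= #|XC|.
Proof.
move=> [esym _] [[_ _ _ covX] /existsP[fX HfX] noX _] [[_ /existsP[fA HfA] _ _] Ht].
set S := AB :|: AC.
set O := (AC :\: XB) :|: (XC :&: S).
have HO : is_oct e S O.
  apply/andP; split.
    apply/subsetP => x; rewrite !inE => /orP[/andP[_ ->]|/andP[_ ->]] //.
    by rewrite orbT.
  apply/existsP; exists [ffun x => if x \in XB then fX x else fA x].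
  have key : forall x, x \in S :\: O -> x \notin XB -> (x \in XR) && (x \in AB).
    move=> x; rewrite !inE => /andP[Hn HS] HB.
    have : x \in XB :|: XC :|: XR by rewrite covX.
    move: Hn HS HB; rewrite !inE.
    by case: (x \in XB); case: (x \in XC); case: (x \in XR); case: (x \in AB);
       case: (x \in AC).
  have keyB : forall x, x \in S :\: O -> x \in XB -> x \in XB by [].
  apply/forallP => x; apply/forallP => y; apply/implyP => /and3P[Hx Hy Hxy].
  rewrite !ffunE.
  case: (boolP (x \in XB)) => xB; case: (boolP (y \in XB)) => yB.
  - by have := forallP (forallP HfX x) y; rewrite xB yB Hxy.
  - case/andP: (key y Hy yB) => yR _.
    by move: (noX x y xB yR); rewrite Hxy.
  - case/andP: (key x Hx xB) => xR _.
    by move: (noX y x yB xR); rewrite esym Hxy.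
  - case/andP: (key x Hx xB) => _ xA; case/andP: (key y Hy yB) => _ yA.
    have := forallP (forallP HfA x) y.
    by rewrite xA yA Hxy.
have := @oct_le _ _ _ _ HO; rewrite -Ht => H1.
have H2 : #|O| <= #|AC :\: XB| + #|XC|.
  rewrite cardsU; apply: leq_trans (leq_subr _ _) _.
  by rewrite leq_add2l subset_leq_card // subsetIl.
rewrite -(cardsID XB AC) in H1.
have := leq_trans H1 H2.
by rewrite addnC leq_add2l.
Qed.
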